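(* Let $W$ be a finite complex reflection group and $m\ge 1$ an integer. Then there is a natural isomorphism of bigraded $W$-modules $$\mathbf{e_{\det}}\big(D\!R^{(m)}(W)\big)\;\cong\;\big(\mathcal{A}^m/\langle \mathbf{x},\mathbf{y}\rangle\mathcal{A}^m\big)\otimes \epsilon^{\otimes(1-m)},$$ where $\langle \mathbf{x},\mathbf{y}\rangle=\langle x_1,y_1,\dots,x_\ell,y_\ell\rangle$ is the ideal of polynomials without constant term.
   Context: Let $W\subseteq \mathrm{U}(V)$ be a finite complex reflection group of rank $\ell$ acting on $V\cong\mathbb{C}^\ell$. $W$ acts on $V\oplus V^*$ by $\omega(v\oplus v^* )=\omega v\oplus {}^t(\omega^{-1})v^*$, hence (contragrediently) on the ring of polynomial functions $\mathbb{C}[\mathbf{x},\mathbf{y}]=\mathbb{C}[x_1,y_1,\dots,x_\ell,y_\ell]=\mathbb{C}[V\oplus V^*]$ by algebra automorphisms preserving the bigrading by ($\mathbf{x}$-degree, $\mathbf{y}$-degree). For a $W$-module $S$, $\mathbf{e}=\frac1{|W|}\sum_{\omega}\omega$ and $\mathbf{e_{\det}}=\frac1{|W|}\sum_\omega \det^{-1}(\omega)\,\omega$; $\mathbf{e_{\det}}(S)$ is the determinantal component $\{p: \omega(p)=\det(\omega)p\ \forall \omega\}$. A polynomial $p$ is invariant if $\omega(p)=p$ for all $\omega$, determinantal if $\omega(p)=\det(\omega)p$ for all $\omega$. $\epsilon$ is the one-dimensional representation $\omega\cdot z=\det(\omega)z$, $\epsilon^{\otimes k}$ its $k$-th tensor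 power ($\omega\cdot z=\det^k(\omega)z$, $k\in\mathbb{Z}$). $\mathcal{I}$ is the ideal of $\mathbb{C}[\mathbf{x},\mathbf{y}]$ generated by invariant polynomials without constant term, $\mathcal{A}$ the ideal generated by all determinantal polynomials, and the space of generalized diagonal coinvariants is $D\!R^{(m)}(W)=(\mathcal{A}^{m-1}/\mathcal{A}^{m-1}\mathcal{I})\otimes\epsilon^{\otimes(1-m)}$, a bigraded $W$-module. *)

(* Defs.v *)
From HB Require Import structures.
From mathcomp Require Import all_boot all_order all_algebra.
From mathcomp Require Import mpoly.
Set Implicit Arguments. Unset Strict Implicit. Unset Printing Implicit Defensive.
Import Order.TTheory GRing.Theory Num.Theory.
Local Open Scope ring_scope.

Section Defs.
Variable C : numClosedFieldType. (* stands for the complex numbers *)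
Variable l : nat.                (* rank: V = C^l *)

(* Polynomial functions on V (+) V^*: variables 0..l-1 are x_1..x_l,
   variables l..2l-1 are y_1..y_l. *)
Notation P := {mpoly C[l + l]}.
Definition xvar (i : 'I_l) : P := 'X_(lshift l i).
Definition yvar (i : 'I_l) : P := 'X_(rshift l i).

Definition unitary (w : 'M[C]_l) := w *m (map_mx Num.conj w)^T = 1%:M.
Definition is_reflection (r : 'M[C]_l) :=
  \rank (r - 1%:M) = 1%N /\ exists k, (0 < k)%N /\ r ^+ k = 1%:M.
Definition complex_reflection_group (W : seq 'M[C]_l) :=
  [/\ 1%:M \in W,
      (forall a b, a \in W -> b \in W -> a *m b \in W),
      (forall a, a \in W -> a \in unitmx /\ invmx a \in W),
      (forall a, a \in W -> unitary a) &
      (forall a, a \in W -> exists s : seq 'M[C]_l,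
          (forall r, r \in s -> r \in W /\ is_reflection r) /\
          a = foldr mulmx 1%:M s)].

(* (w p)(v, v^* ) = p(w^{-1} v, ^t w v^* ), i.e.
   x_i |-> sum_j (w^{-1})_{ij} x_j,  y_i |-> sum_j w_{ji} y_j *)
Definition act_subst (w : 'M[C]_l) (i : 'I_(l + l)) : P :=
  match split i with
  | inl j => \sum_(k < l) (invmx w) j k *: xvar k
  | inr j => \sum_(k < l) w k j *: yvar k
  end.
Definition act (w : 'M[C]_l) (p : P) : P :=
  p \mPo [tuple act_subst w i | i < l + l].

Definition invariant (W : seq 'M[C]_l) (p : P) :=
  forall w, w \in W -> act w p = p.
Definition determinantal (W : seq 'M[C]_l) (p : P) :=
  forall w, w \in W -> act w p = \det w *: p.

Definition ideal_gen (S : P -> Prop) : P -> Prop := fun p =>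
  exists k (c s : 'I_k -> P), (forall i, S (s i)) /\ p = \sum_(i < k) c i * s i.
Definition ideal_mul (I J : P -> Prop) : P -> Prop :=
  ideal_gen (fun p => exists a b, [/\ I a, J b & p = a * b]).
Fixpoint ideal_pow (I : P -> Prop) (k : nat) : P -> Prop :=
  match k with
  | 0 => fun _ => True
  | k'.+1 => ideal_mul (ideal_pow I k') I
  end.

Definition idI (W : seq 'M[C]_l) : P -> Prop :=
  ideal_gen (fun p => invariant W p /\ p@_0%MM = 0).
Definition idA (W : seq 'M[C]_l) : P -> Prop := ideal_gen (determinantal W).
Definition idXY : P -> Prop :=
  ideal_gen (fun p => exists i : 'I_(l + l), p = 'X_i).

Definition xdeg (mo : 'X_{1..l + l}) : nat := (\sum_(i < l) mo (lshift l i))%N.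
Definition ydeg (mo : 'X_{1..l + l}) : nat := (\sum_(i < l) mo (rshift l i))%N.
Definition bihomog (a b : nat) (p : P) :=
  forall mo, mo \in msupp p -> xdeg mo = a /\ ydeg mo = b.

(* ---------- W-modules given as quotients U/U' of subspaces U' <= U of P,
   with action  w . [p] = chi(w) [w p]   (chi a one-dimensional twist) ---------- *)
(* the determinantal component e_det(U/U') of such a module, lifted to P:
   the p in U whose class [p] satisfies w.[p] = det(w) [p] *)
Definition det_component (W : seq 'M[C]_l) (chi : 'M[C]_l -> C)
    (U U' : P -> Prop) : P -> Prop := fun p =>
  U p /\ forall w, w \in W -> U' (chi w *: act w p - \det w *: p).

(* an isomorphism of bigraded W-modules U1/U2 (twist chi1) ~ U3/U4 (twist chi2),
   presented by a bigrading-preserving linear lift f : P -> P *)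
Definition bigraded_Wmod_iso (W : seq 'M[C]_l)
    (U1 U2 : P -> Prop) (chi1 : 'M[C]_l -> C)
    (U3 U4 : P -> Prop) (chi2 : 'M[C]_l -> C) :=
  exists f : P -> P,
  linear f /\
      (forall a b p, bihomog a b p -> bihomog a b (f p)) /\
      (forall p, U1 p -> U3 (f p)) /\
      (forall p, U2 p -> U4 (f p)) /\
      (forall p, U1 p -> U4 (f p) -> U2 p) /\
      (forall q, U3 q -> exists p, U1 p /\ U4 (f p - q)) /\
      (forall w p, w \in W -> U1 p ->
         U4 (f (chi1 w *: act w p) - chi2 w *: act w (f p))).

Definition eps_pow (k : int) (w : 'M[C]_l) : C := (\det w) ^ k.

End Defs.

(* Main.v *)
Require Import Defs.
From HB Require Import structures.
From mathcomp Require Import all_boot all_order all_algebra.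
From mathcomp Require Import mpoly.
Import Order.TTheory GRing.Theory Num.Theory.
Local Open Scope ring_scope.
Set Implicit Arguments. Unset Strict Implicit. Unset Printing Implicit Defensive.


Section Ideals.
Variable C : numClosedFieldType.
Variable l : nat.
Local Notation P := {mpoly C[l + l]}.
Implicit Types (S T : P -> Prop) (p q : P).

Lemma ig0 S : ideal_gen S 0.
Proof. by exists 0%N, (fun _ => 0), (fun _ => 0); split=> [[]//|]; rewrite big_ord0. Qed.

Lemma igS S s : S s -> ideal_gen S s.
Proof.
move=> Ss; exists 1%N, (fun _ => 1), (fun _ => s); split=> // .
by rewrite big_ord1 mul1r.
Qed.

Lemma igD S p q : ideal_gen S p -> ideal_gen S q -> ideal_gen S (p + q).
Proof.
move=> [k1 [c1 [s1 [h1 ->]]]] [k2 [c2 [s2 [h2 ->]]]].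
exists (k1 + k2)%N.
exists (fun i => match split i with inl a => c1 a | inr b => c2 b end).
exists (fun i => match split i with inl a => s1 a | inr b => s2 b end).
split.
  by move=> i; case: (split i).
rewrite big_split_ord /=; congr (_ + _); apply: eq_bigr => i _.
  by rewrite (unsplitK (inl i)).
by rewrite (unsplitK (inr i)).
Qed.

Lemma igM S c p : ideal_gen S p -> ideal_gen S (c * p).
Proof.
move=> [k [c1 [s1 [h1 ->]]]]; exists k, (fun i => c * c1 i), s1; split=> //.
by rewrite mulr_sumr; apply: eq_bigr => i _; rewrite mulrA.
Qed.

Lemma igZ S a p : ideal_gen S p -> ideal_gen S (a *: p).
Proof. by move=> h; rewrite -mul_mpolyC; apply: igM. Qed.

Lemma igN S p : ideal_gen S p -> ideal_gen S (- p).
Proof. by move=> h; rewrite -scaleN1r; apply: igZ. Qed.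

Lemma igB S p q : ideal_gen S p -> ideal_gen S q -> ideal_gen S (p - q).
Proof. by move=> hp hq; apply: igD => //; apply: igN. Qed.

Lemma ig_ind S (Q : P -> Prop) :
  Q 0 -> (forall p q, Q p -> Q q -> Q (p + q)) ->
  (forall c s, S s -> Q (c * s)) -> forall p, ideal_gen S p -> Q p.
Proof.
move=> h0 hD hM p [k [c [s [hs ->]]]].
by apply: (big_ind Q) => // i _; apply: hM.
Qed.

Lemma ig_sub S T : (forall s, S s -> ideal_gen T s) ->
  forall p, ideal_gen S p -> ideal_gen T p.
Proof.
move=> h; apply: ig_ind; [exact: ig0 | move=> *; exact: igD|].
by move=> c s /h; apply: igM.
Qed.

Lemma ig_mul S T p q : ideal_gen S p -> ideal_gen T q ->
  ideal_gen (fun x => exists a b, [/\ S a, T b & x = a * b]) (p * q).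
Proof.
move=> hp hq; move: p hp; apply: ig_ind.
- by rewrite mul0r; apply: ig0.
- by move=> p1 p2 h1 h2; rewrite mulrDl; apply: igD.
move=> c s Ss; rewrite -mulrA; apply: igM.
move: q hq; apply: ig_ind.
- by rewrite mulr0; apply: ig0.
- by move=> p1 p2 h1 h2; rewrite mulrDr; apply: igD.
move=> d t Tt; rewrite mulrCA; apply: igM; apply: igS.
by exists s, t.
Qed.

End Ideals.


Lemma comp_comp (R : comNzRingType) a b c (p : {mpoly R[a]})
   (lq : a.-tuple {mpoly R[b]}) (lr : b.-tuple {mpoly R[c]}) :
  (p \mPo lq) \mPo lr = p \mPo [tuple (tnth lq i \mPo lr) | i < a].
Proof.
elim/mpolyind: p => [|x m p _ _ IH]; first by rewrite !comp_mpoly0.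
rewrite !comp_mpolyD !comp_mpolyZ IH; congr (_ *: _ + _).
rewrite !comp_mpolyX rmorph_prod /=; apply: eq_bigr => i _.
by rewrite rmorphXn tnth_mktuple.
Qed.

Lemma invmxM_unit (R : comUnitRingType) n (v w : 'M[R]_n) :
  v \in unitmx -> w \in unitmx -> invmx (v *m w) = invmx w *m invmx v.
Proof.
move=> uv uw.
have uvw : v *m w \in unitmx by rewrite unitmx_mul uv uw.
have e : v *m w *m (invmx w *m invmx v) = 1%:M.
  by rewrite -mulmxA (mulmxA w) mulmxV // mul1mx mulmxV.
by rewrite -[LHS]mulmx1 -e mulmxA mulVmx // mul1mx.
Qed.

Section Act.
Variable C : numClosedFieldType.
Variable l : nat.
Local Notation P := {mpoly C[l + l]}.
Implicit Types (p q : P) (v w : 'M[C]_l).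

Lemma actD w p q : act w (p + q) = act w p + act w q.
Proof. exact: comp_mpolyD. Qed.
Lemma actZ w a p : act w (a *: p) = a *: act w p.
Proof. exact: comp_mpolyZ. Qed.
Lemma act0 w : act w 0 = 0.
Proof. exact: comp_mpoly0. Qed.
Lemma actB w p q : act w (p - q) = act w p - act w q.
Proof. exact: comp_mpolyB. Qed.
Lemma actM w p q : act w (p * q) = act w p * act w q.
Proof. by rewrite /act rmorphM. Qed.
Lemma act1 w : act w 1 = 1.
Proof. by rewrite /act rmorph1. Qed.
Lemma actC w c : act w c%:MP = c%:MP.
Proof. exact: comp_mpolyC. Qed.
Lemma act_sum w I (r : seq I) (F : I -> P) :
  act w (\sum_(i <- r) F i) = \sum_(i <- r) act w (F i).
Proof. by rewrite /act raddf_sum. Qed.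
Lemma actX w i : act w 'X_i = act_subst w i.
Proof. by rewrite /act comp_mpolyXU -tnth_nth tnth_mktuple. Qed.

Lemma act_xvar w j : act w (@xvar C l j) = \sum_(k < l) (invmx w) j k *: @xvar C l k.
Proof. by rewrite /xvar actX /act_subst (unsplitK (inl j)). Qed.
Lemma act_yvar w j : act w (@yvar C l j) = \sum_(k < l) w k j *: @yvar C l k.
Proof. by rewrite /yvar actX /act_subst (unsplitK (inr j)). Qed.

Lemma act_comp v w p : v \in unitmx -> w \in unitmx ->
  act v (act w p) = act (v *m w) p.
Proof.
move=> uv uw; rewrite {1}/act {1}/act comp_comp /act.
congr (comp_mpoly _ p); apply: eq_from_tnth => i; rewrite !tnth_mktuple.
rewrite -/(act v _) /act_subst; case: (split i) => j.
  rewrite act_sum (invmxM_unit uv uw).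
  under eq_bigr do rewrite actZ act_xvar scaler_sumr.
  rewrite exchange_big /=; apply: eq_bigr => k _.
  by rewrite mxE scaler_suml; apply: eq_bigr => k' _; rewrite scalerA.
rewrite act_sum.
under eq_bigr do rewrite actZ act_yvar scaler_sumr.
rewrite exchange_big /=; apply: eq_bigr => k _.
by rewrite mxE scaler_suml; apply: eq_bigr => k' _; rewrite scalerA mulrC.
Qed.

Lemma mnm1_neq0 (i : 'I_(l + l)) : (U_(i)%MM == 0%MM) = false.
Proof. by apply/eqP => /mnmP/(_ i); rewrite mnm1E mnm0E eqxx. Qed.

Lemma xy0 p : @idXY C l p -> p@_0 = 0.
Proof.
move: p; rewrite /idXY; apply: ig_ind => [|p1 p2 h1 h2|c s [i ->]]; first by rewrite mcoeff0.

  by rewrite mcoeffD h1 h2 addr0.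
by rewrite (rmorphM (mcoeff 0%MM)) /= mcoeffX mnm1_neq0 mulr0.
Qed.

Lemma Xm_xy (m : 'X_{1..l + l}) : m != 0%MM -> @idXY C l 'X_[m].
Proof.
move=> nz; case: (pickP (fun i => m i != 0%N)) => [i hi | h]; last first.
  case/eqP: nz; apply/mnmP => i; rewrite mnm0E.
  by move/negbFE: (h i) => /eqP.
rewrite mpolyXE_id (bigD1 i) //= -(@prednK (m i)); last by rewrite lt0n.
rewrite exprS -mulrA mulrC; apply: igM; apply: igS; by exists i.
Qed.

Lemma xy_const p : @idXY C l (p - (p@_0)%:MP).
Proof.
elim/mpolyind: p => [|c m p _ _ IH]; first by rewrite mcoeff0 mpolyC0 subr0; apply: ig0.
have -> : c *: 'X_[m] + p - ((c *: 'X_[m] + p)@_0)%:MP =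
   c *: ('X_[m] - ((m == 0%MM)%:R)%:MP) + (p - (p@_0)%:MP).
  rewrite mcoeffD mcoeffZ mcoeffX mpolyCD mpolyCM mul_mpolyC scalerBr.
  by rewrite opprD !addrA; congr (_ + _); rewrite addrAC.
apply: igD => //; apply: igZ.
case: eqP => [->|/eqP nz]; first by rewrite mpolyX0 mpolyC1 subrr; apply: ig0.
by rewrite mpolyC0 subr0; apply: Xm_xy.
Qed.

Lemma zero_xy p : p@_0 = 0 -> @idXY C l p.
Proof. by move=> h; have := xy_const p; rewrite h mpolyC0 subr0. Qed.

Lemma act_xy w p : @idXY C l p -> @idXY C l (act w p).
Proof.
move: p; rewrite {1}/idXY; apply: ig_ind => [|p1 p2 h1 h2|c s [i ->]]; first by rewrite act0; apply: ig0.
  by rewrite actD; apply: igD.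
rewrite actM actX; apply: igM; rewrite /act_subst; case: (split i) => j.
  apply: (big_ind (@idXY C l)) => [|*|k _]; [exact: ig0|exact: igD|].
  by apply: igZ; apply: igS; exists (lshift l k).
apply: (big_ind (@idXY C l)) => [|*|k _]; [exact: ig0|exact: igD|].
by apply: igZ; apply: igS; exists (rshift l k).
Qed.

Lemma act_const w p : (act w p)@_0 = p@_0.
Proof.
have := xy0 (act_xy w (xy_const p)).
rewrite actB actC mcoeffB mcoeffC eqxx mulr1 => /eqP.
by rewrite subr_eq0 => /eqP.
Qed.

End Act.


Section Bihomog.
Variable C : numClosedFieldType.
Variable l : nat.
Local Notation P := {mpoly C[l + l]}.
Implicit Types (p q g : P) (v w : 'M[C]_l).

Lemma bh0 a b : bihomog a b (0 : P).
Proof. by move=> m; rewrite mcoeff_msupp mcoeff0 eqxx. Qed.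

Lemma bhD a b p q : bihomog a b p -> bihomog a b q -> bihomog a b (p + q).
Proof.
by move=> hp hq m /msuppD_le; rewrite mem_cat => /orP [/hp|/hq].
Qed.

Lemma bhZ a b c p : bihomog a b p -> bihomog a b (c *: p).
Proof. by move=> hp m /msuppZ_le /hp. Qed.

Lemma bh_sum a b I (r : seq I) (Pr : pred I) (F : I -> P) :
  (forall i, Pr i -> bihomog a b (F i)) ->
  bihomog a b (\sum_(i <- r | Pr i) F i).
Proof.
by move=> h; apply: (big_ind (bihomog a b)) => //; [exact: bh0|exact: bhD].
Qed.

Lemma xdegD (m1 m2 : 'X_{1..l + l}) : xdeg (m1 + m2)%MM = (xdeg m1 + xdeg m2)%N.
Proof. by rewrite /xdeg -big_split; apply: eq_bigr => i _; rewrite mnmDE. Qed.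
Lemma ydegD (m1 m2 : 'X_{1..l + l}) : ydeg (m1 + m2)%MM = (ydeg m1 + ydeg m2)%N.
Proof. by rewrite /ydeg -big_split; apply: eq_bigr => i _; rewrite mnmDE. Qed.

Lemma bhM a b c d p q : bihomog a b p -> bihomog c d q ->
  bihomog (a + c)%N (b + d)%N (p * q).
Proof.
move=> hp hq m /msuppM_le /allpairsP [[m1 m2] [/= h1 h2 ->]].
rewrite xdegD ydegD; have [-> ->] := hp _ h1; have [-> ->] := hq _ h2; done.
Qed.

Lemma bh1 : bihomog 0 0 (1 : P).
Proof.
move=> m; rewrite msupp1 inE => /eqP ->.
by rewrite /xdeg /ydeg !big1 // => i _; rewrite mnm0E.
Qed.

Definition dx (i : 'I_(l + l)) : nat := if split i is inl _ then 1%N else 0%N.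
Definition dy (i : 'I_(l + l)) : nat := if split i is inl _ then 0%N else 1%N.

Lemma bhX a b p k : bihomog a b p -> bihomog (a * k)%N (b * k)%N (p ^+ k).
Proof.
move=> hp; elim: k => [|k IH]; first by rewrite !muln0 expr0; exact: bh1.
by rewrite exprS !mulnS; apply: bhM.
Qed.

Lemma bh_xvar k : bihomog 1 0 (@xvar C l k).
Proof.
move=> m; rewrite /xvar msuppX inE => /eqP ->; split.
  rewrite /xdeg (bigD1 k) //= big1 => [|i ik]; first by rewrite mnm1E eqxx.
  by rewrite mnm1E eq_lshift eq_sym (negbTE ik).
by rewrite /ydeg big1 // => i _; rewrite mnm1E eq_lrshift.
Qed.

Lemma bh_yvar k : bihomog 0 1 (@yvar C l k).
Proof.
move=> m; rewrite /yvar msuppX inE => /eqP ->; split.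
  by rewrite /xdeg big1 // => i _; rewrite mnm1E eq_rlshift.
rewrite /ydeg (bigD1 k) //= big1 => [|i ik]; first by rewrite mnm1E eqxx.
by rewrite mnm1E eq_rshift eq_sym (negbTE ik).
Qed.

Lemma bh_subst w i : bihomog (dx i) (dy i) (act_subst w i).
Proof.
rewrite /dx /dy /act_subst; case: (split i) => j.
  by apply: bh_sum => k _; apply: bhZ; apply: bh_xvar.
by apply: bh_sum => k _; apply: bhZ; apply: bh_yvar.
Qed.

Lemma xdeg_dx (m : 'X_{1..l + l}) : xdeg m = (\sum_i dx i * m i)%N.
Proof.
rewrite big_split_ord /= [X in (_ + X)%N]big1 ?addn0 => [|i _]; last first.
  by rewrite /dx (unsplitK (inr i)).
by apply: eq_bigr => i _; rewrite /dx (unsplitK (inl i)) mul1n.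
Qed.
Lemma ydeg_dy (m : 'X_{1..l + l}) : ydeg m = (\sum_i dy i * m i)%N.
Proof.
rewrite big_split_ord /= [X in (X + _)%N]big1 ?add0n => [|i _]; last first.
  by rewrite /dy (unsplitK (inl i)).
by apply: eq_bigr => i _; rewrite /dy (unsplitK (inr i)) mul1n.
Qed.

Lemma act_bh w a b p : bihomog a b p -> bihomog a b (act w p).
Proof.
move=> hp; rewrite (mpolyE p) act_sum big_seq; apply: bh_sum => m mp.
rewrite actZ; apply: bhZ; rewrite /act comp_mpolyX.
have [<- <-] := hp m mp; rewrite xdeg_dx ydeg_dy.
apply: (big_rec3 (fun a b p => bihomog a b p)); first exact: bh1.
move=> i y1 y2 y3 _ h; apply: bhM => //; rewrite tnth_mktuple.
exact (bhX (k:=m i) (@bh_subst w i)).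
Qed.

End Bihomog.


Section Reynolds.
Variable C : numClosedFieldType.
Variable l : nat.
Variable W : seq 'M[C]_l.
Hypothesis W1 : 1%:M \in W.
Hypothesis WM : forall a b, a \in W -> b \in W -> a *m b \in W.
Hypothesis WU : forall a, a \in W -> a \in unitmx.
Hypothesis WV : forall a, a \in W -> invmx a \in W.
Local Notation P := {mpoly C[l + l]}.
Implicit Types (p q g : P) (v w : 'M[C]_l).

Definition SI k g := forall w, w \in W -> act w g = (\det w)^+k *: g.
Definition Wu := undup W.
Definition NW : C := (size Wu)%:R.
Definition pi k p : P :=
  NW^-1 *: \sum_(w <- Wu) (((\det w)^-1) ^+ k) *: act w p.

Lemma det_neq0 w : w \in W -> \det w != 0.
Proof. by move/WU; rewrite unitmxE unitfE. Qed.

Lemma NW_neq0 : NW != 0.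
Proof.
rewrite /NW pnatr_eq0 -lt0n -has_predT; apply/hasP; exists 1%:M => //.
by rewrite mem_undup.
Qed.

Lemma mulmx_inj v : v \in unitmx -> injective (mulmx v : 'M[C]_l -> 'M[C]_l).
Proof.
by move=> uv a b e; rewrite -[a]mul1mx -[b]mul1mx -(mulVmx uv) -!mulmxA e.
Qed.
Lemma mulmxr_inj v : v \in unitmx -> injective (fun a : 'M[C]_l => a *m v).
Proof.
by move=> uv a b /= e; rewrite -[a]mulmx1 -[b]mulmx1 -(mulmxV uv) !mulmxA e.
Qed.

Lemma perm_left v : v \in W -> perm_eq (map (mulmx v) Wu) Wu.
Proof.
move=> vW; apply: uniq_perm; rewrite ?undup_uniq //.
  by rewrite (map_inj_uniq (mulmx_inj (WU vW))) undup_uniq.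
move=> x; apply/mapP/idP => [[y yW ->]|xW].
  by rewrite mem_undup WM // -mem_undup.
exists (invmx v *m x); first by rewrite mem_undup WM ?WV // -mem_undup.
by rewrite mulmxA mulmxV ?WU // mul1mx.
Qed.

Lemma perm_right v : v \in W -> perm_eq (map (fun a => a *m v) Wu) Wu.
Proof.
move=> vW; apply: uniq_perm; rewrite ?undup_uniq //.
  by rewrite (map_inj_uniq (mulmxr_inj (WU vW))) undup_uniq.
move=> x; apply/mapP/idP => [[y yW ->]|xW].
  by rewrite mem_undup WM // -mem_undup.
exists (x *m invmx v); first by rewrite mem_undup WM ?WV // -mem_undup.
by rewrite -mulmxA mulVmx ?WU // mulmx1.
Qed.

Lemma piD k p q : pi k (p + q) = pi k p + pi k q.
Proof.
by rewrite /pi -scalerDr -big_split /=; apply: congr1; apply: eq_bigr => w _;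
  rewrite actD scalerDr.
Qed.
Lemma piZ k a p : pi k (a *: p) = a *: pi k p.
Proof.
rewrite /pi scalerA (mulrC a) -scalerA; apply: congr1; rewrite scaler_sumr.
by apply: eq_bigr => w _; rewrite actZ !scalerA mulrC.
Qed.
Lemma pi0 k : pi k 0 = 0.
Proof. by rewrite /pi big1 ?scaler0 // => w _; rewrite act0 scaler0. Qed.
Lemma piB k p q : pi k (p - q) = pi k p - pi k q.
Proof. by rewrite -scaleN1r piD piZ scaleN1r. Qed.

Lemma inv_pow_mul (a b : C) k : a != 0 ->
  a ^+ k * ((a * b)^-1) ^+ k = b^-1 ^+ k.
Proof.
by move=> a0; rewrite invfM exprMn mulrA -exprMn mulfV // expr1n mul1r.
Qed.

Lemma piSI k p : SI k (pi k p).
Proof.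
move=> v vW; rewrite /pi actZ act_sum scalerA (mulrC _ NW^-1) -scalerA.
apply: congr1.
set F := fun u => (\det u)^-1 ^+ k *: act u p.
have -> : \sum_(w <- Wu) F w = \sum_(w <- map (mulmx v) Wu) F w.
  exact/esym/perm_big/perm_left.
rewrite big_map scaler_sumr.
apply: eq_big_seq => w; rewrite mem_undup => wW; rewrite /F.
rewrite actZ act_comp ?WU // scalerA det_mulmx inv_pow_mul //; exact: det_neq0.
Qed.

Lemma pi_act k v p : v \in W -> pi k (act v p) = (\det v)^+k *: pi k p.
Proof.
move=> vW; rewrite /pi scalerA (mulrC _ NW^-1) -scalerA; apply: congr1.
set F := fun u => (\det u)^-1 ^+ k *: act u p.
have -> : \sum_(w <- Wu) F w = \sum_(w <- map (fun a => a *m v) Wu) F w.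
  exact/esym/perm_big/perm_right.
rewrite big_map scaler_sumr.
apply: eq_big_seq => w; rewrite mem_undup => wW; rewrite /F.
rewrite act_comp ?WU // scalerA det_mulmx (mulrC (\det w)) inv_pow_mul //.
exact: det_neq0.
Qed.

Lemma pi_fix k g : SI k g -> pi k g = g.
Proof.
move=> hg; rewrite /pi (eq_big_seq (fun _ => g)); last first.
  move=> w; rewrite mem_undup => wW; rewrite hg // scalerA -exprMn mulVf ?expr1n ?scale1r //.
  exact: det_neq0.
rewrite big_const_seq count_predT iter_addr_0 -scaler_nat scalerA mulVf ?scale1r //.
exact: NW_neq0.
Qed.

Lemma pi_mulSI i j q g : SI j g -> pi (i + j) (q * g) = pi i q * g.
Proof.
move=> hg; rewrite /pi -scalerAl mulr_suml; apply: congr1.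
apply: eq_big_seq => w; rewrite mem_undup => wW.
rewrite actM hg // -scalerAr scalerA -scalerAl; congr (_ *: _).
by rewrite exprD -mulrA -exprMn mulVf ?expr1n ?mulr1 //; exact: det_neq0.
Qed.

Lemma SI_mul i j a b : SI i a -> SI j b -> SI (i + j) (a * b).
Proof.
move=> ha hb w wW; rewrite actM ha // hb // -scalerAr -scalerAl scalerA.
by rewrite exprD mulrC.
Qed.

Lemma SI_det g : determinantal W g -> SI 1 g.
Proof. by move=> h w wW; rewrite h // expr1. Qed.

Lemma SI_1 : SI 0 1.
Proof. by move=> w wW; rewrite act1 expr0 scale1r. Qed.

Lemma pi0_const q : (pi 0 q)@_0 = q@_0.
Proof.
rewrite /pi mcoeffZ raddf_sum /=.
rewrite (eq_bigr (fun _ => q@_0)) => [|w _]; last by rewrite expr0 scale1r act_const.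
rewrite big_const_seq count_predT iter_addr_0 -mulr_natl mulrA mulVf ?mul1r //; exact: NW_neq0.
Qed.

Lemma pi0_inv q : Defs.invariant W (pi 0 q).
Proof. by move=> w wW; rewrite piSI // expr0 scale1r. Qed.


Local Notation A := (idA W).

Lemma Apow_0 k : ideal_pow A k 0.
Proof. by case: k => [|k] //=; apply: ig0. Qed.
Lemma Apow_D k p q : ideal_pow A k p -> ideal_pow A k q -> ideal_pow A k (p + q).
Proof. by case: k => [|k] //=; apply: igD. Qed.
Lemma Apow_M k c p : ideal_pow A k p -> ideal_pow A k (c * p).
Proof. by case: k => [|k] //=; apply: igM. Qed.

Lemma Apow_dec k p : ideal_pow A k p ->
  ideal_gen (fun g => SI k g /\ ideal_pow A k g) p.
Proof.
elim: k p => [|k IH] p hp.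
  by rewrite -[p]mulr1; apply: igM; apply: igS; split=> //; exact: SI_1.
move: p hp; apply: ig_ind => [|p1 p2 h1 h2|c s [a [b [ha hb ->]]]].
- exact: ig0.
- exact: igD.
apply: igM; apply: ig_sub (ig_mul (IH a ha) hb).
move=> x [g [d [[SIg Ag] dd ->]]]; apply: igS; split.
  by rewrite -addn1; apply: SI_mul => //; exact: SI_det.
by apply: igS; exists g, d; split => //; apply: igS.
Qed.

Lemma Apow_sub k p : ideal_pow A k.+1 p -> ideal_pow A k p.
Proof.
move: p; apply: ig_ind => [|p1 p2 h1 h2|c s [a [b [ha hb ->]]]].
- exact: Apow_0.
- exact: Apow_D.
by rewrite mulrCA mulrC; apply: Apow_M.
Qed.

Lemma piA k p : ideal_pow A k p -> ideal_pow A k.+1 (pi k.+1 p).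
Proof.
move/Apow_dec; move: p; apply: ig_ind => [|p1 p2 h1 h2|c g [SIg Ag]].
- by rewrite pi0; apply: Apow_0.
- by rewrite piD; apply: Apow_D.
rewrite -add1n pi_mulSI // mulrC; apply: igS; exists g, (pi 1 c); split => //.
by apply: igS => w wW; rewrite piSI // expr1.
Qed.


Lemma pi_bh k a b p : bihomog a b p -> bihomog a b (pi k p).
Proof.
move=> hp; rewrite /pi; apply: bhZ; apply: bh_sum => w _; apply: bhZ.
exact: act_bh.
Qed.
Variable n : nat.
Local Notation J := (ideal_mul (ideal_pow A n) (idI W)).
Local Notation U4 := (ideal_mul (@idXY C l) (ideal_pow A n.+1)).
Local Notation chi := (eps_pow (1 - (n.+1)%:Z)).
Local Notation pim := (pi n.+1).

Lemma hchi w : w \in W -> chi w * (\det w) ^+ n.+1 = \det w.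
Proof.
move=> wW; rewrite /eps_pow.
have := expfzDr (1 - (n.+1)%:Z) (n.+1)%:Z (det_neq0 wW).
by rewrite subrK expr1z => <-.
Qed.

Lemma hchi' w : w \in W -> (\det w) ^+ n * chi w = 1.
Proof.
move=> wW; apply: (mulIf (det_neq0 wW)).
by rewrite mul1r mulrAC -exprSr mulrC hchi.
Qed.

Lemma SI0_inv i : Defs.invariant W i -> SI 0 i.
Proof. by move=> h w wW; rewrite h // expr0 scale1r. Qed.

Lemma J_dec p : J p -> ideal_gen (fun x => exists g i,
  [/\ SI n g, ideal_pow A n g, (Defs.invariant W i /\ i@_0 = 0) & x = g * i]) p.
Proof.
apply: ig_sub => x [a [b [ha hb ->]]].
apply: (ig_sub _ (ig_mul (Apow_dec ha) hb)) => y [g [i [[SIg Ag] Ii ->]]].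
by apply: igS; exists g, i.
Qed.

Lemma L4 p : J p -> U4 (pim p).
Proof.
move/J_dec; move: p; apply: ig_ind => [|p1 p2 h1 h2|c s [g [i [SIg Ag [Ii I0] ->]]]].
- by rewrite pi0; apply: ig0.
- by rewrite piD; apply: igD.
have e1 : c * (g * i) = (c * i) * g by rewrite mulrA mulrAC.
have e2 : pi 1 (c * i) = pi 1 c * i :=
  pi_mulSI 1 c (SI0_inv Ii).
rewrite e1 -add1n (pi_mulSI 1 _ SIg) e2.
have -> : pi 1 c * i * g = i * (g * pi 1 c).
  by rewrite -mulrA mulrC -mulrA.
apply: igS; exists i, (g * pi 1 c); split => //; first exact: zero_xy.
apply: igS; exists g, (pi 1 c); split => //.
by apply: igS => w wW; rewrite piSI // expr1.
Qed.

Lemma Jsum (I : eqType) (r : seq I) (F : I -> P) :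
  (forall i, i \in r -> J (F i)) -> J (\sum_(i <- r) F i).
Proof.
move=> h; rewrite big_seq; apply: (big_ind J) => //; [exact: ig0|exact: igD].
Qed.

Lemma L_inj1 p : (forall w, w \in W -> J (chi w *: act w p - \det w *: p)) ->
  J (p - pim p).
Proof.
move=> h.
have e : pim p - p =
    NW^-1 *: \sum_(w <- Wu) ((\det w)^-1 ^+ n.+1 *: act w p - p).
  rewrite big_split /= sumrN big_const_seq count_predT iter_addr_0.
  rewrite scalerDr scalerN -scaler_nat scalerA mulVf ?scale1r //.
  exact: NW_neq0.
rewrite -opprB e; apply: igN; apply: igZ; apply: Jsum => w; rewrite mem_undup => wW.
have d0 := det_neq0 wW.
have -> : (\det w)^-1 ^+ n.+1 *: act w p - p =
   ((\det w)^-1 ^+ n.+1 * (\det w) ^+ n) *: (chi w *: act w p - \det w *: p).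
  rewrite scalerBr !scalerA -mulrA hchi' // mulr1 -mulrA -exprSr.
  by rewrite -exprMn mulVf // expr1n scale1r.
by apply: igZ; apply: h.
Qed.

Lemma L_inj2 h : U4 h -> J (pim h).
Proof.
move: h; apply: ig_ind => [|p1 p2 h1 h2|c s [e [a [He Ha ->]]]].
- by rewrite pi0; apply: ig0.
- by rewrite piD; apply: igD.
rewrite mulrA; have He' : idXY (c * e) by apply: igM.
move: (c * e) He' => e' He'; have Ha2 := Apow_dec Ha; clear Ha; move: a Ha2.
apply: ig_ind => [|p1 p2 h1 h2|d g [SIg Ag]].
- by rewrite mulr0 pi0; apply: ig0.
- by rewrite mulrDr piD; apply: igD.
rewrite mulrA.
have -> : pim (e' * d * g) = pi 0 (e' * d) * g := pi_mulSI 0 _ SIg.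
apply: igS; exists g, (pi 0 (e' * d)); split => //; last by rewrite mulrC.
  exact: Apow_sub.
apply: igS; split; first exact: pi0_inv.
by rewrite pi0_const mulrC; apply: xy0; apply: igM.
Qed.

Lemma L_surj q : ideal_pow A n.+1 q -> U4 (pim q - q).
Proof.
move/(Apow_dec); move: q; apply: ig_ind => [|p1 p2 h1 h2|c g [SIg Ag]].
- by rewrite pi0 subr0; apply: ig0.
- by rewrite piD opprD addrACA; apply: igD.
have -> : pim (c * g) = pi 0 c * g := pi_mulSI 0 _ SIg.
rewrite -mulrBl; apply: igS; exists (pi 0 c - c), g; split => //.
by apply: zero_xy; rewrite mcoeffB pi0_const subrr.
Qed.


Lemma main_iso : bigraded_Wmod_iso W
    (det_component W chi (ideal_pow A n) J) J chi
    (ideal_pow A n.+1) U4 chi.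
Proof.
exists pim; split; [|split; [|split; [|split; [|split; [|split]]]]].
- by move=> a u v; rewrite piD piZ.
- by move=> a b p; apply: pi_bh.
- by move=> p [Ap _]; apply: piA.
- exact: L4.
- move=> p [Ap h] /L_inj2 hJ.
  have -> : p = (p - pim p) + pim (pim p) by rewrite (pi_fix (piSI _ _)) subrK.
  by apply: igD => //; apply: L_inj1.
- move=> q hq; exists (pim q); split.
    split; first exact: Apow_sub (piA (Apow_sub hq)).
    by move=> w wW; rewrite piSI // scalerA hchi // subrr; apply: ig0.
  by rewrite (pi_fix (piSI _ _)); apply: L_surj.
- by move=> w p wW _; rewrite piZ pi_act // piSI // subrr; apply: ig0.
Qed.

End Reynolds.

Theorem theorem3p4 (C : numClosedFieldType) (l : nat) (W : seq 'M[C]_l) (m : nat) :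
  complex_reflection_group W -> (1 <= m)%N ->
  bigraded_Wmod_iso W
    (det_component W (eps_pow (1 - m%:Z))
       (ideal_pow (idA W) m.-1)
       (ideal_mul (ideal_pow (idA W) m.-1) (idI W)))
    (ideal_mul (ideal_pow (idA W) m.-1) (idI W))
    (eps_pow (1 - m%:Z))
    (ideal_pow (idA W) m)
    (ideal_mul (@idXY C l) (ideal_pow (idA W) m))
    (eps_pow (1 - m%:Z)).
Proof.
move=> [W1 WM WUV _ _]; case: m => [//|n] _.
have WU a : a \in W -> a \in unitmx by move=> h; case: (WUV a h).
have WV a : a \in W -> invmx a \in W by move=> h; case: (WUV a h).
exact: (@main_iso C l W W1 WM WU WV n).
Qed.
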